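(* Let $r$ be even, $n=r+2$, and let $a,h_1,h_2:\mathbb F_2^r\to\mathbb F_2$. Define $\mathfrak f:\mathbb F_2^r\times\mathbb F_2^2\to\mathbb F_2$ by $\mathfrak f(x,y)=a(x)\oplus(h_1(x)\oplus y_1)(h_2(x)\oplus y_2)$. Suppose that any one of the following holds: (1) $a$ is bent, $h_1=h_2=g$ for some $g$, and $a\oplus g$ is semi-bent; (2) $a$ is bent, $h_1$ is affine, and $a\oplus h_2$ is semi-bent; (3) $W_a(u)\in\{0,\pm2^{r/2},\pm2^{(r+2)/2}\}$ for all $u$, and $h_1,h_2$ are affine; (4) $W_a(u)\in\{0,\pm2^{r/2},\pm2^{(r+2)/2}\}$ for all $u$, $h_1$ is affine, and $a\oplus h_2$ is bent or semi-bent. Then $W_{\mathfrak f}(u,v)\in\{0,\pm2^{n/2},\pm2^{(n+2)/2}\}$ for all $(u,v)\in\mathbb F_2^r\times\mathbb F_2^2$.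
   Context: $W_f(\omega)=\sum_x(-1)^{f(x)\oplus\omega\cdot x}$. For even $r$, $a:\mathbb F_2^r\to\mathbb F_2$ is bent if $|W_a(u)|=2^{r/2}$ for all $u$, and semi-bent if $W_a(u)\in\{0,\pm2^{(r+2)/2}\}$ for all $u$. Affine functions are $x\mapsto c\cdot x\oplus d$. *)

(* Defs.v *)
(* F_2^m is modelled as {ffun 'I_m -> bool}, F_2 as bool,
   addition in F_2 as xor (addb), multiplication as andb. *)
From mathcomp Require Import all_boot all_order all_algebra.
Set Implicit Arguments. Unset Strict Implicit. Unset Printing Implicit Defensive.
Import GRing.Theory Num.Theory.
Local Open Scope ring_scope.

Definition bvec (m : nat) := {ffun 'I_m -> bool}.

Definition dotb (m : nat) (w x : bvec m) : bool :=
  \big[addb/false]_(i < m) (w i && x i).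

Definition sgnb (b : bool) : int := if b then -1 else 1.

Definition walsh (m : nat) (f : bvec m -> bool) (w : bvec m) : int :=
  \sum_(x : bvec m) sgnb (f x (+) dotb w x).

Definition walsh2 (m k : nat) (f : bvec m -> bvec k -> bool)
    (u : bvec m) (v : bvec k) : int :=
  \sum_(x : bvec m) \sum_(y : bvec k) sgnb (f x y (+) dotb u x (+) dotb v y).

Definition is_bent (m : nat) (f : bvec m -> bool) : Prop :=
  forall u, `|walsh f u| = (2 ^+ (m %/ 2)%N)%R.

Definition is_semibent (m : nat) (f : bvec m -> bool) : Prop :=
  forall u, walsh f u \in [:: 0; 2 ^+ ((m + 2) %/ 2)%N; - 2 ^+ ((m + 2) %/ 2)%N].

Definition is_affine (m : nat) (f : bvec m -> bool) : Prop :=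
  exists (c : bvec m) (d : bool), forall x, f x = dotb c x (+) d.

Definition five_valued (w : int) (m : nat) : bool :=
  w \in [:: 0; 2 ^+ (m %/ 2)%N; - 2 ^+ (m %/ 2)%N;
            2 ^+ ((m + 2) %/ 2)%N; - 2 ^+ ((m + 2) %/ 2)%N].

Definition frak_f (r : nat) (a h1 h2 : bvec r -> bool) (x : bvec r) (y : bvec 2) : bool :=
  a x (+) ((h1 x (+) y ord0) && (h2 x (+) y (Ordinal (isT : (1 < 2)%N)))).

(* Main.v *)
Require Import Defs.
From mathcomp Require Import all_boot all_order all_algebra.
From mathcomp Require Import zify.
Import GRing.Theory Num.Theory.
Local Open Scope ring_scope.

Definition addv {m : nat} (u c : bvec m) : bvec m := [ffun i => u i (+) c i].

Lemma dotbD {m : nat} (u c x : bvec m) : dotb (addv u c) x = dotb u x (+) dotb c x.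
Proof.
rewrite /dotb -big_split /=; apply: eq_bigr => i _; rewrite ffunE.
by case: (u i); case: (c i); case: (x i).
Qed.

Lemma sgnbD (b d : bool) : sgnb (b (+) d) = sgnb d * sgnb b.
Proof. by case: b; case: d; rewrite /sgnb /= ?mulr1 ?mul1r ?mulrNN ?mulr1. Qed.

Lemma walsh_aff {m : nat} {f g : bvec m -> bool} {c : bvec m} {d : bool} :
  (forall x, g x = f x (+) (dotb c x (+) d)) ->
  forall u, walsh g u = sgnb d * walsh f (addv u c).
Proof.
move=> H u; rewrite /walsh mulr_sumr; apply: eq_bigr => x _.
rewrite H dotbD -sgnbD; congr sgnb; clear H.
by case: (f x); case: (dotb c x); case: d; case: (dotb u x).
Qed.

Definition P5 {m : nat} (f : bvec m -> bool) := forall u, five_valued (walsh f u) m.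

Lemma fv_sgn (w : int) m d : five_valued w m -> five_valued (sgnb d * w) m.
Proof.
case: d; rewrite /sgnb ?mul1r // mulN1r /five_valued !inE.
by move=> /orP[/eqP->|/orP[/eqP->|/orP[/eqP->|/orP[/eqP->|/eqP->]]]];
  rewrite ?oppr0 ?opprK eqxx /= ?orbT.
Qed.

Lemma P5_shift {m : nat} {f g : bvec m -> bool} {c : bvec m} {d : bool} :
  P5 f -> (forall x, g x = f x (+) (dotb c x (+) d)) -> P5 g.
Proof. by move=> Hf H u; rewrite (walsh_aff H); apply: fv_sgn. Qed.

Lemma P5_ext {m : nat} {f g : bvec m -> bool} :
  P5 f -> (forall x, g x = f x) -> P5 g.
Proof.
move=> Hf H; apply: (P5_shift (c := [ffun => false]) (d := false) Hf) => x.
rewrite H /dotb big1 ?addbF // => i _; by rewrite ffunE.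
Qed.

Lemma bent_P5 {m : nat} {f : bvec m -> bool} : is_bent f -> P5 f.
Proof.
move=> H u; have := H u; rewrite /five_valued !inE.
case: (lerP 0 (walsh f u)) => hw.
  by rewrite ger0_norm // => ->; rewrite eqxx orbT.
by rewrite ltr0_norm // => <-; rewrite opprK eqxx !orbT.
Qed.

Lemma semibent_P5 {m : nat} {f : bvec m -> bool} : is_semibent f -> P5 f.
Proof.
move=> H u; have := H u; rewrite /five_valued !inE.
by move=> /orP[/eqP->|/orP[/eqP->|/eqP->]]; rewrite eqxx /= ?orbT.
Qed.

Definition mk2 (b0 b1 : bool) : bvec 2 := [ffun i : 'I_2 => if val i == 0%N then b0 else b1].

Lemma sum_bvec2 (F : bvec 2 -> int) :
  \sum_(y : bvec 2) F y = F (mk2 true true) + F (mk2 true false)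
                        + (F (mk2 false true) + F (mk2 false false)).
Proof.
rewrite (reindex (fun p : bool * bool => mk2 p.1 p.2)) /=.
  by rewrite -(pair_big xpredT xpredT (fun a b => F (mk2 a b))) /= !big_bool.
exists (fun y : bvec 2 => (y ord0, y (Ordinal (isT : (1 < 2)%N)))) => [[b0 b1]|y] _.
  by rewrite /mk2 !ffunE.
apply/ffunP => i; rewrite ffunE; case: i => [[|[|k]] Hk] //=; congr (y _); exact: val_inj.
Qed.

Lemma walsh2_eq (r : nat) (a h1 h2 : bvec r -> bool) u (v : bvec 2) :
  walsh2 (frak_f a h1 h2) u v =
  2 * sgnb (v ord0 && v (Ordinal (isT : (1 < 2)%N))) *
  walsh (fun x => a x (+) (v ord0 && h1 x) (+) (v (Ordinal (isT : (1 < 2)%N)) && h2 x)) u.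
Proof.
rewrite /walsh2 /walsh mulr_sumr; apply: eq_bigr => x _.
rewrite sum_bvec2 /frak_f.
have dv : forall b0 b1, dotb v (mk2 b0 b1) = (v ord0 && b0) (+) (v (Ordinal (isT : (1 < 2)%N)) && b1).
  move=> b0 b1; rewrite /dotb !big_ord_recl big_ord0 /mk2 !ffunE /=.
  rewrite addbF; congr (_ (+) (v _ && _)); exact: val_inj.
rewrite !dv /mk2 !ffunE /=.
case: (v ord0); case: (v _); case: (a x); case: (h1 x); case: (h2 x); case: (dotb u x);
  rewrite /sgnb /=; lia.
Qed.

Lemma fv_lift (w : int) r b : five_valued w r -> five_valued (2 * sgnb b * w) (r + 2).
Proof.
move=> H; rewrite -mulrA; have := @fv_sgn _ _ b H; move: (sgnb b * w) => w'.
have e1 : ((r + 2) %/ 2 = (r %/ 2).+1)%N by rewrite divnDr // addn1.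
have e2 : ((r + 2 + 2) %/ 2 = ((r + 2) %/ 2).+1)%N by rewrite divnDr // addn1.
rewrite /five_valued e2 !e1 !inE; move: (r %/ 2)%N => k; rewrite !exprS.
move: (2 ^+ k) => K.
by move=> /orP[/eqP->|/orP[/eqP->|/orP[/eqP->|/orP[/eqP->|/eqP->]]]];
  rewrite ?mulr0 ?mulrN ?eqxx /= ?orbT.
Qed.

Theorem mainTheorem6 (r : nat) (a h1 h2 : bvec r -> bool) :
  ~~ odd r ->
  ((is_bent a /\ (exists g, h1 = g /\ h2 = g /\ is_semibent (fun x => a x (+) g x)))
   \/ (is_bent a /\ is_affine h1 /\ is_semibent (fun x => a x (+) h2 x))
   \/ ((forall u, five_valued (walsh a u) r) /\ is_affine h1 /\ is_affine h2)
   \/ ((forall u, five_valued (walsh a u) r) /\ is_affine h1 /\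
       (is_bent (fun x => a x (+) h2 x) \/ is_semibent (fun x => a x (+) h2 x)))) ->
  forall (u : bvec r) (v : bvec 2),
    five_valued (walsh2 (frak_f a h1 h2) u v) (r + 2).
Proof.
move=> _ H u v; rewrite walsh2_eq; apply: fv_lift.
move: (v ord0) (v (Ordinal (isT : (1 < 2)%N))) => v0 v1.
suff : P5 (fun x => a x (+) (v0 && h1 x) (+) (v1 && h2 x)) by move=> /(_ u).
case: H => [[Ha [g' [-> [-> Hs]]]]|[[Ha [[c [d Hh1]] Hs]]|[[Ha [[c [d Hh1]] [c2 [d2 Hh2]]]]|[Ha [[c [d Hh1]] Hs]]]]].
- move/bent_P5: Ha => Ha; move/semibent_P5: Hs => Hs.
  case: v0; case: v1.
  + by apply: (P5_ext Ha) => x /=; case: (g' x); case: (a x).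
  + by apply: (P5_ext Hs) => x /=; case: (g' x); case: (a x).
  + by apply: (P5_ext Hs) => x /=; case: (g' x); case: (a x).
  + by apply: (P5_ext Ha) => x /=; case: (g' x); case: (a x).
- move/bent_P5: Ha => Ha; move/semibent_P5: Hs => Hs.
  case: v0; case: v1.
  + apply: (P5_shift (c := c) (d := d) Hs) => x /=; rewrite Hh1.
    by case: (h2 x); case: (a x); move: (dotb c x) (d) => p q; case: p; case: q.
  + apply: (P5_shift (c := c) (d := d) Ha) => x /=; rewrite Hh1.
    by case: (a x); move: (dotb c x) (d) => p q; case: p; case: q.
  + by apply: (P5_ext Hs) => x /=; case: (a x).
  + by apply: (P5_ext Ha) => x /=; case: (a x).
- case: v0; case: v1.
  + apply: (P5_shift (c := addv c c2) (d := d (+) d2) Ha) => x /=; rewrite Hh1 Hh2 dotbD.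
    by case: (a x); move: (dotb c x) (d) (dotb c2 x) (d2) => p q p2 q2; case: p; case: q; case: p2; case: q2.
  + apply: (P5_shift (c := c) (d := d) Ha) => x /=; rewrite Hh1.
    by case: (a x); move: (dotb c x) (d) => p q; case: p; case: q.
  + apply: (P5_shift (c := c2) (d := d2) Ha) => x /=; rewrite Hh2.
    by case: (a x); move: (dotb c2 x) (d2) => p q; case: p; case: q.
  + by apply: (P5_ext Ha) => x /=; case: (a x).
- have {}Hs : P5 (fun x => a x (+) h2 x).
    by case: Hs; [apply: bent_P5|apply: semibent_P5].
  case: v0; case: v1.
  + apply: (P5_shift (c := c) (d := d) Hs) => x /=; rewrite Hh1.
    by case: (h2 x); case: (a x); move: (dotb c x) (d) => p q; case: p; case: q.
  + apply: (P5_shift (c := c) (d := d) Ha) => x /=; rewrite Hh1.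
    by case: (a x); move: (dotb c x) (d) => p q; case: p; case: q.
  + by apply: (P5_ext Hs) => x /=; case: (a x).
  + by apply: (P5_ext Ha) => x /=; case: (a x).
Qed.
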